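(* Let $P$ and $Q$ be probability distributions (with densities, $P$ absolutely continuous with respect to $Q$), let $\epsilon \ge 0$, $\delta > 0$ and $\tau > 1$. Let $Y_1, \dots, Y_s$ be i.i.d. samples from the privacy loss distribution of $(P,Q)$, i.e. each $Y_k = \log\frac{P(X_k)}{Q(X_k)}$ with $X_k \sim P$ drawn independently, and let $$\hat{\delta} = \frac{1}{s}\sum_{k=1}^s \max\{1 - e^{\epsilon - Y_k}, 0\}.$$ If $H_{e^\epsilon}(P,Q) \ge \tau\delta$, then $$\Pr[\hat{\delta} < \delta] \le \exp\left(-\frac{s(\tau-1)^2\delta}{8\tau/3 - 2/3}\right).$$
   Context: For distributions $P, Q$ and $\alpha \ge 0$, the $\alpha$-hockey-stick divergence is $H_\alpha(P,Q) = \int_x \max\{P(x) - \alpha Q(x), 0\}\,dx$. It satisfies $H_\alpha(P,Q) = \mathbb{E}_Y[\max\{1-\alpha e^{-Y},0\}]$ where $Y$ follows the privacy loss distribution of $(P,Q)$, so $\hat\delta$ is a Monte Carlo estimate of $H_{e^\epsilon}(P,Q)$. *)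

(* Defs.v *)
From HB Require Import structures.
From mathcomp Require Import all_boot all_order all_algebra.
From mathcomp Require Import all_classical all_reals all_analysis.
Set Implicit Arguments. Unset Strict Implicit. Unset Printing Implicit Defensive.
Import Order.TTheory GRing.Theory Num.Theory.
Local Open Scope classical_set_scope.
Local Open Scope ring_scope.
Local Open Scope ereal_scope.

Definition dens_measure d (T : measurableType d) (R : realType)
  (mu : {measure set T -> \bar R}) (f : T -> R) (A : set T) : \bar R :=
  \int[mu]_(x in A) (f x)%:E.

Definition is_density d (T : measurableType d) (R : realType)
  (mu : {measure set T -> \bar R}) (f : T -> R) : Prop :=
  measurable_fun setT f /\ (forall x, (0 <= f x)%R) /\
  \int[mu]_x (f x)%:E = 1.

Definition abs_cont d (T : measurableType d) (R : realType)
  (mu : {measure set T -> \bar R}) (p q : T -> R) : Prop :=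
  forall A, measurable A -> dens_measure mu q A = 0 -> dens_measure mu p A = 0.

Definition hockey_stick d (T : measurableType d) (R : realType)
  (mu : {measure set T -> \bar R}) (p q : T -> R) (alpha : R) : \bar R :=
  \int[mu]_x (Num.max (p x - alpha * q x) 0)%R%:E.

Definition mutually_independent dO (Omega : measurableType dO) (R : realType)
  (Pr : probability Omega R) d (T : measurableType d) (s : nat)
  (X : 'I_s -> Omega -> T) : Prop :=
  forall A : 'I_s -> set T, (forall k, measurable (A k)) ->
    Pr (\bigcap_(k in [set: 'I_s]) (X k @^-1` A k)) =
    \prod_(k < s) Pr (X k @^-1` A k).

Definition privacy_loss (R : realType) T (p q : T -> R) (x : T) : R :=
  ln (p x / q x).

Definition delta_hat (R : realType) (s : nat) (eps : R) (Y : 'I_s -> R) : R :=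
  (s%:R^-1 * \sum_(k < s) Num.max (1 - expR (eps - Y k)) 0)%R.

(* Main.v *)
Require Import Defs.
From HB Require Import structures.
From mathcomp Require Import all_boot all_order all_algebra.
From mathcomp Require Import all_classical all_reals all_analysis.
From mathcomp Require Import ring lra measurable_realfun.
Import Order.TTheory GRing.Theory Num.Theory.
Local Open Scope classical_set_scope.
Local Open Scope ring_scope.

Lemma expR_ge2 (R : realType) (x : R) : 0 <= x -> 1 + x + x ^+ 2 / 2 <= expR x.
Proof.
move=> x_ge0; rewrite /expR.
pose f := fun (i : nat) => (i == 0)%:R + x *+ (i == 1) + x ^+ 2 / 2 *+ (i == 2).
have F m : (2 < m)%N -> \sum_(0 <= i < m) f i = 1 + x + x ^+ 2 / 2.
  move=> m2.
  rewrite big_ltn ?(ltn_trans _ m2)// big_ltn ?(ltn_trans _ m2)// big_ltn //.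
  rewrite big_nat_cond big1 ?addr0; last first.
    move=> i /andP[/andP[ni _] _]; rewrite /f.
    have h0 : (i == 0)%N = false by apply/negbTE; rewrite -lt0n (ltn_trans _ ni).
    have h1 : (i == 1)%N = false by apply/negbTE; rewrite neq_ltn (ltn_trans _ ni) ?orbT.
    have h2 : (i == 2)%N = false by apply/negbTE; rewrite neq_ltn ni ?orbT.
    by rewrite h0 h1 h2 /= !mulr0n !addr0.
  by rewrite /f /= !mulr0n !mulr1n !addr0 !add0r addrA.
rewrite [leLHS](_ : _ = limn (series (f : nat -> R^o))); last first.
  by apply/esym/(@lim_near_cst R^o) => //; near=> k; apply: F; near: k.
apply: ler_lim; first by apply: (@is_cvg_near_cst _ R^o (1 + x + x ^+ 2 / 2)); near=> k; apply: F; near: k.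
  exact: is_cvg_series_exp_coeff.
near=> k; apply: ler_sum => -[|[|[|i]]] _; rewrite /f /exp_coeff/= ?add0r.
- by rewrite !(mulr0n, expr0, addr0, divr1).
- by rewrite !(mulr0n, mulr1n, expr1, addr0, add0r, divr1).
- by rewrite !(mulr0n, mulr1n, addr0, add0r).
- by rewrite mulr0n divr_ge0// exprn_ge0.
Unshelve. all: by end_near. Qed.

Lemma expN_le2 (R : realType) (x : R) : 0 <= x -> expR (- x) <= 1 - x + x ^+ 2 / 2.
Proof.
move=> x0; rewrite expRN -div1r ler_pdivrMr ?expR_gt0//.
apply: (@le_trans _ _ ((1 - x + x ^+ 2 / 2) * (1 + x + x ^+ 2 / 2))).
  by nra.
by rewrite ler_wpM2l ?expR_ge2//; nra.
Qed.

Lemma expN_lin (R : realType) (lam z : R) : 0 <= lam <= 1 -> 0 <= z <= 1 ->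
  expR (- (lam * z)) <= 1 - (lam - lam ^+ 2 / 2) * z.
Proof.
move=> /andP[l0 l1] /andP[z0 z1].
apply: le_trans; first exact: (@expN_le2 R _ (mulr_ge0 l0 z0)).
have : (lam * z) ^+ 2 <= lam ^+ 2 * z.
  by rewrite exprMn ler_wpM2l ?exprn_ge0// expr2 ler_piMr.
by nra.
Qed.

Lemma measurable_inv (R : realType) : measurable_fun [set: R] (@GRing.inv R).
Proof.
rewrite -(setUCr [set (0:R)]).
apply/measurable_funU => //; [exact: measurableC | split].
- move=> _ Y mY.
  have [Y0|Y0] := pselect (Y 0^-1).
  + rewrite (_ : _ `&` _ = [set 0]) //.
    by apply/seteqP; split => x /=; [case | move=> ->].
  + rewrite (_ : _ `&` _ = set0) //.
    by apply/seteqP; split => x //=; case => -> /Y0.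
- apply: measurable_realfun.open_continuous_measurable_fun.
    by apply: closed_openC; apply: compact_closed; [exact: Rhausdorff | exact: compact_set1].
  move=> x; rewrite inE /= => /eqP x0; exact: inv_continuous.
Qed.

Definition gfun {R : realType} {T : Type} (p q : T -> R) (eps : R) (x : T) : R :=
  Num.max (1 - expR (eps - ln (p x / q x))) 0.

Lemma gfun_ge0 (R : realType) T (p q : T -> R) eps x : 0 <= gfun p q eps x.
Proof. by rewrite /gfun le_max lexx orbT. Qed.

Lemma gfun_le1 (R : realType) T (p q : T -> R) eps x : gfun p q eps x <= 1.
Proof. by rewrite /gfun ge_max ler01 andbT gerBl expR_ge0. Qed.

Lemma gfun_meas (R : realType) d (T : measurableType d) (p q : T -> R) eps :
  measurable_fun setT p -> measurable_fun setT q ->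
  measurable_fun setT (gfun p q eps).
Proof.
move=> mp mq; apply: measurable_realfun.measurable_maxr; last exact: measurable_cst.
apply: measurable_realfun.measurable_funB; first exact: measurable_cst.
apply: measurableT_comp; first exact: measurable_realfun.measurable_expR.
apply: measurable_realfun.measurable_funB; first exact: measurable_cst.
apply: measurableT_comp; first exact: measurable_realfun.measurable_ln.
apply: measurable_realfun.measurable_funM => //.
apply: measurableT_comp => //; exact: measurable_inv.
Qed.

Lemma gfun_hock (R : realType) T (p q : T -> R) eps x :
  0 <= p x -> 0 < q x ->
  Num.max (p x - expR eps * q x) 0 = gfun p q eps x * p x.
Proof.
move=> p0 q0; rewrite /gfun.
have [->|pp] := eqVneq (p x) 0.
  rewrite mulr0 sub0r; apply/max_idPr.
  by rewrite oppr_le0 mulr_ge0 ?expR_ge0 ?ltW.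
have {}pp : 0 < p x by rewrite lt_def pp.
rewrite maxr_pMl ?ltW// mul0r expRB lnK ?posrE ?divr_gt0//.
congr Num.max; field.
by rewrite !gt_eqF.
Qed.

Lemma final_arith (R : realType) (tau delta : R) (N : nat) (lam c : R) :
  1 < tau -> 0 < delta ->
  tau * (8 * tau - 2) / (delta * (tau - 1) ^+ 3) < N%:R ->
  lam = (tau - 1) / tau -> c = lam - lam ^+ 2 / 2 ->
  lam * delta - c * (tau * delta) + c / N%:R <=
  - ((tau - 1) ^+ 2 * delta) / (8 * tau / 3 - 2 / 3).
Proof.
move=> t1 d0 KN lamE cE.
have t0 : 0 < tau by lra.
have u0 : 0 < tau - 1 by lra.
have K0 : 0 < tau * (8 * tau - 2) / (delta * (tau - 1) ^+ 3).
  by rewrite divr_gt0 ?mulr_gt0 ?exprn_gt0//; lra.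
have N0 : 0 < (N%:R : R) by apply: lt_trans KN.
have lam0 : 0 <= lam by rewrite lamE divr_ge0 ?ltW.
have lam1 : lam <= 1 by rewrite lamE ler_pdivrMr// mul1r; lra.
have c1 : c <= 1.
  have h : 0 <= lam ^+ 2 / 2 by rewrite divr_ge0 ?exprn_ge0.
  rewrite cE; lra.
have c0 : 0 <= c.
  have h : lam ^+ 2 <= lam by rewrite expr2 ler_piMr.
  rewrite cE; lra.
have key : lam * delta - c * (tau * delta) +
   delta * (tau - 1) ^+ 3 / (tau * (8 * tau - 2)) =
   - ((tau - 1) ^+ 2 * delta) / (8 * tau / 3 - 2 / 3).
  have h1 : 8 * tau - 2 != 0 by rewrite gt_eqF //; lra.
  have h2 : tau != 0 by rewrite gt_eqF.
  have h3 : 8 * tau / 3 - 2 / 3 != 0 by rewrite gt_eqF //; lra.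
  have h4 : tau - 1 != 0 by rewrite gt_eqF.
  rewrite cE lamE; field.
  by rewrite ?h1 ?h2 ?h3 ?h4.
rewrite -key lerD2l.
apply: (@le_trans _ _ (N%:R^-1)).
  by rewrite ler_pdivrMr// mulVf ?gt_eqF.
rewrite -invf_div lef_pV2 ?posrE//; exact: ltW.
Qed.

Local Open Scope ereal_scope.

Theorem theorem2 (R : realType) (d : measure_display) (T : measurableType d)
  (mu : {measure set T -> \bar R}) (p q : T -> R)
  (dO : measure_display) (Omega : measurableType dO) (Pr : probability Omega R)
  (s : nat) (X : 'I_s -> Omega -> T) (eps delta tau : R) :
  is_density mu p -> is_density mu q -> abs_cont mu p q ->
  (0 <= eps)%R -> (0 < delta)%R -> (1 < tau)%R ->
  (forall k, measurable_fun setT (X k)) ->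
  (forall k A, measurable A -> Pr (X k @^-1` A) = dens_measure mu p A) ->
  mutually_independent Pr X ->
  hockey_stick mu p q (expR eps) >= (tau * delta)%:E ->
  Pr [set w | (delta_hat eps (fun k => privacy_loss p q (X k w)) < delta)%R]
    <= (expR (- (s%:R * (tau - 1) ^+ 2 * delta) /
                (8 * tau / 3 - 2 / 3)))%:E.
Proof.
move=> [mp [p0 p1]] [mq [q0 q1]] pq eps0 delta0 tau1 mX XP indep hock.
set g := gfun p q eps.
have mg : measurable_fun setT g by exact: gfun_meas.
have g0 x : (0 <= g x)%R by exact: gfun_ge0.
have g1 x : (g x <= 1)%R by exact: gfun_le1.
set E := [set w | _].
have EE : E = [set w | (s%:R^-1 * \sum_(k < s) g (X k w) < delta)%R] by [].
have mE : measurable E.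
  have mF : measurable_fun setT (fun w => s%:R^-1 * \sum_(k < s) g (X k w))%R.
    apply: measurable_realfun.measurable_funM; first exact: measurable_cst.
    apply: measurable_sum => k; exact: measurableT_comp.
  have := mF measurableT _ (measurable_itv `]-oo, delta[).
  rewrite setTI EE; congr measurable; apply/seteqP; split => w /=;
    by rewrite in_itv /=.
case: s X mX XP indep E EE mE => [|s'] X mX XP indep E EE mE.
  rewrite [X in expR X](_ : _ = 0%R); last by rewrite !mul0r oppr0 mul0r.
  by rewrite expR0; exact: probability_le1.
set s := s'.+1.
have s0 : (0 < s%:R :> R)%R by rewrite ltr0n.
have tau0 : (0 < tau)%R by rewrite (lt_trans ltr01).
set lam := ((tau - 1) / tau)%R.
set c := (lam - lam ^+ 2 / 2)%R.
have lam0 : (0 <= lam)%R by rewrite divr_ge0 ?subr_ge0 ?ltW.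
have lam1 : (lam <= 1)%R by rewrite ler_pdivrMr// mul1r gerBl.
have c0 : (0 <= c)%R.
  have h : (lam ^+ 2 <= lam)%R by rewrite expr2 ler_piMr.
  rewrite /c; lra.
set K := (tau * (8 * tau - 2) / (delta * (tau - 1) ^+ 3))%R.
set N := (Num.truncn K).+1.
have NK : (K < N%:R)%R by exact: truncnS_gt.
have N0 : (0 < N%:R :> R)%R by rewrite ltr0n.
set h := (fun x => g x * N%:R)%R.
set lev := fun x => Num.truncn (h x).
set A := fun j : nat => [set x | lev x = j].
have h0 x : (0 <= h x)%R by rewrite mulr_ge0 ?ler0n.
have levN x : (lev x < N.+1)%N.
  rewrite /lev truncn_lt_nat//; apply: (@le_lt_trans _ _ N%:R%R).
    by rewrite /h ler_piMl ?ler0n.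
  by rewrite ltr_nat.
have levle x : ((lev x)%:R <= h x)%R by rewrite /lev truncn_le.
have levgt x : (h x < (lev x).+1%:R)%R by exact: truncnS_gt.
have Aeq j x : A j x <-> (j%:R <= h x < j.+1%:R)%R.
  by rewrite /A /lev /= -truncn_eq//; split => [->|/eqP].
have mA j : measurable (A j).
  have -> : A j = setT `&` h @^-1` [set` `[j%:R, j.+1%:R[%R].
    apply/seteqP; split => x /=; rewrite in_itv /=; first by move/Aeq.
    by move=> [_ ?]; apply/Aeq.
  have mh : measurable_fun setT h.
    exact: (measurable_realfun.measurable_funM mg (measurable_cst _)).
  exact: mh measurableT _ (measurable_itv _).
set pi := fun j : nat => fine (\int[mu]_(x in A j) (p x)%:E).
have intp_le1 j : \int[mu]_(x in A j) (p x)%:E <= 1.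
  rewrite -p1; apply: ge0_subset_integral => //=; first exact/measurable_EFinP.
  by move=> x _; rewrite lee_fin.
have intp_ge0 j : 0 <= \int[mu]_(x in A j) (p x)%:E.
  by apply: integral_ge0 => x _; rewrite lee_fin.
have piE j : \int[mu]_(x in A j) (p x)%:E = (pi j)%:E.
  by rewrite fineK // ge0_fin_numE ?(le_lt_trans (intp_le1 j)) ?ltry.
have pi0 j : (0 <= pi j)%R by rewrite fine_ge0.
have split (f : T -> R) : measurable_fun setT f -> (forall x, 0 <= f x)%R ->
   \int[mu]_x (f x)%:E = \sum_(j < N.+1) \int[mu]_(x in A j) (f x)%:E.
  move=> mf f0.
  have U : \big[setU/set0]_(j < N.+1) A j = setT.
    apply/seteqP; split => // x _.
    by rewrite -bigcup_mkord; exists (lev x) => //=.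
  rewrite -U (@ge0_integral_bigsetU _ _ _ mu _ (fun j : 'I_N.+1 => A j)) //.
  all: first [exact: index_enum_uniq | by move=> j; exact: mA
    | by move=> i j _ _ [x [/= Ai Aj]]; apply: val_inj; rewrite /= -Ai -Aj
    | by rewrite U; exact/measurable_EFinP | by move=> x _; rewrite lee_fin | idtac].
have sumpi : (\sum_(j < N.+1) pi j = 1)%R.
  have := split p mp p0; rewrite p1.
  under eq_bigr do rewrite piE.
  by rewrite sumEFin => /eqP; rewrite eqe => /eqP <-.
have hgp : hockey_stick mu p q (expR eps) <= \int[mu]_x (g x * p x)%:E.
  set Z := [set x | q x = 0%R].
  have mZ : measurable Z.
    by have := mq measurableT _ (measurable_set1 0%R); rewrite setTI.
  have mgp : measurable_fun setT (fun x => g x * p x)%R.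
    exact: measurable_funM.
  have mmax : measurable_fun setT (fun x => Num.max (p x - expR eps * q x) 0)%R.
    apply: measurable_maxr; last exact: measurable_cst.
    apply: measurable_funB => //; apply: measurable_funM => //.
  rewrite /hockey_stick -(setUCr Z) ge0_integral_setU //; first last.
  - by rewrite disj_set2E setICr.
  - by move=> x _; rewrite lee_fin le_max lexx orbT.
  - by rewrite setUCr; exact/measurable_EFinP.
  - exact: measurableC.
  have -> : \int[mu]_(x in Z) (Num.max (p x - expR eps * q x) 0)%:E = 0.
    have hq : dens_measure mu q Z = 0.
      by apply: integral0_eq => x /= ->.
    rewrite -(pq Z mZ hq); apply: eq_integral => x; rewrite inE /= => ->.
    by rewrite mulr0 subr0; congr EFin; apply/max_idPl.
  rewrite add0e.
  have -> : \int[mu]_(x in ~` Z) (Num.max (p x - expR eps * q x) 0)%:E =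
            \int[mu]_(x in ~` Z) (g x * p x)%:E.
    apply: eq_integral => x; rewrite inE /= => qx; congr EFin.
    by apply: gfun_hock => //; rewrite lt_def q0 andbT; apply/eqP.
  rewrite setUCr; apply: ge0_subset_integral => //; first exact: measurableC.
    exact/measurable_EFinP.
  by move=> x _; rewrite lee_fin mulr_ge0.
have sumgp : (tau * delta <= \sum_(j < N.+1) (j.+1%:R / N%:R) * pi j)%R.
  rewrite -lee_fin; apply: (le_trans hock); apply: (le_trans hgp).
  rewrite (split (fun x => g x * p x)%R); last 2 first.
  - exact: measurable_funM.
  - by move=> x; rewrite mulr_ge0.
  rewrite -sumEFin; apply: lee_sum => j _.
  rewrite EFinM -piE -ge0_integralZl_EFin //; last 2 first.
  - by move=> x _; rewrite lee_fin.
  - by apply/measurable_EFinP; apply: measurable_funS mp.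
  apply: ge0_le_integral => //.
  - by move=> x _; rewrite lee_fin mulr_ge0.
  - by apply/measurable_EFinP; apply: measurable_funS (measurable_funM mg mp).
  - apply/measurable_EFinP; apply: measurable_funM; first exact: measurable_cst.
    exact: measurable_funS mp.
  move=> x /= Ax; rewrite lee_fin ler_wpM2r //.
  have := levgt x; rewrite Ax /h => H.
  by rewrite ler_pdivlMr // ltW.
set G := fun j : nat => (expR (- (lam * (j%:R / N%:R))) * pi j)%R.
set B := (\sum_(j < N.+1) G j)%R.
have B0 : (0 <= B)%R by rewrite sumr_ge0 // => j _; rewrite mulr_ge0 ?expR_ge0.
have Ble : (B <= 1 - c * (tau * delta - N%:R^-1))%R.
  apply: (@le_trans _ _ (\sum_(j < N.+1) (1 - c * (j%:R / N%:R)) * pi j)%R).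
    apply: ler_sum => j _; rewrite ler_wpM2r //; apply: expN_lin; rewrite ?lam0 ?lam1 //.
    apply/andP; split; first by rewrite divr_ge0.
    by rewrite ler_pdivrMr // mul1r ler_nat -ltnS.
  have -> : (\sum_(j < N.+1) (1 - c * (j%:R / N%:R)) * pi j =
     \sum_(j < N.+1) pi j - c * \sum_(j < N.+1) (j.+1%:R / N%:R) * pi j
     + c * N%:R^-1 * \sum_(j < N.+1) pi j)%R.
    rewrite !mulr_sumr -sumrB -big_split /=; apply: eq_bigr => j _.
    by rewrite -natr1; ring.
  rewrite sumpi mulr1.
  have : (c * (tau * delta) <= c * \sum_(j < N.+1) (j.+1%:R / N%:R) * pi j)%R.
    by rewrite ler_wpM2l.
  lra.
pose V := {ffun 'I_s -> 'I_N.+1}.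
set cond := fun v : V => (\sum_(k < s) ((v k : nat)%:R / N%:R) < s%:R * delta)%R.
set F := fun v : V => if cond v then \bigcap_(k in [set: 'I_s]) X k @^-1` A (v k) else set0.
have mF v : measurable (F v).
  rewrite /F; case: ifP => // _.
  apply: fin_bigcap_measurable; first exact: (@finite_finset 'I_s setT).
  by move=> k _; have := mX k measurableT _ (mA (v k)); rewrite setTI.
have cover : E `<=` \bigcup_(v in [set: V]) F v.
  move=> w; rewrite EE /= => Ew.
  exists [ffun k => Ordinal (levN (X k w))] => //.
  have cv : cond [ffun k => Ordinal (levN (X k w))].
    rewrite /cond; apply: (@le_lt_trans _ _ (\sum_(k < s) g (X k w))%R).
      apply: ler_sum => k _; rewrite ffunE /= ler_pdivrMr //; exact: levle.
    by rewrite -ltr_pdivrMl.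
  by rewrite /F cv => k _ /=; rewrite ffunE.
have := content_sub_fsum Pr (finite_finset (X := [set: V])) (fun v _ => mF v) mE cover.
rewrite (fsbigE (enum V)) ?enum_uniq //.
under eq_bigl do rewrite in_setT.
rewrite big_enum /=.
have PrF v : Pr (F v) = (if cond v then \prod_(k < s) pi (v k) else 0%R)%:E.
  rewrite /F; case: ifP => _; last by rewrite measure0.
  rewrite (indep (fun k => A (v k))); last by move=> k; exact: mA.
  rewrite -prodEFin; apply: eq_bigr => k _; rewrite XP ?mA //; exact: piE.
under eq_bigr do rewrite PrF.
rewrite sumEFin => H; apply: (le_trans H); rewrite lee_fin.
apply: (@le_trans _ _ (\sum_(v : V) expR (lam * (s%:R * delta)) * \prod_(k < s) G (v k))%R).
  apply: ler_sum => v _.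
  have -> : (\prod_(k < s) G (v k) =
     expR (- (lam * \sum_(k < s) ((v k : nat)%:R / N%:R))) * \prod_(k < s) pi (v k))%R.
    rewrite /G big_split /= -expR_sum; congr (expR _ * _)%R.
    by rewrite mulr_sumr -sumrN.
  rewrite mulrA -expRD; case: ifP => cv.
    apply: ler_peMl; first by rewrite prodr_ge0.
    apply: (le_trans _ (expR_ge1Dx _)); rewrite lerDl.
    rewrite -mulrN -mulrDr mulr_ge0 // subr_ge0.
    exact: ltW.
  by rewrite mulr_ge0 ?expR_ge0 ?prodr_ge0.
rewrite -mulr_sumr.
rewrite -(bigA_distr_bigA (fun (k : 'I_s) (j : 'I_N.+1) => G j)) /=.
rewrite prodr_const card_ord -/B.
have BB : (B <= expR (- (c * (tau * delta - N%:R^-1))))%R.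
  by apply: (le_trans Ble); have := expR_ge1Dx (- (c * (tau * delta - N%:R^-1)))%R.
  have Bs : (B ^+ s <= expR (- (c * (tau * delta - N%:R^-1))) ^+ s)%R.
    by apply: lerXn2r; rewrite ?nnegrE ?expR_ge0.
  apply: (le_trans (ler_wpM2l (expR_ge0 _) Bs)).
  rewrite -expRM_natl -expRD ler_expR.
  have fa := @final_arith R tau delta N lam c tau1 delta0 NK erefl erefl.
  have e1 : (lam * (s%:R * delta) + s%:R * - (c * (tau * delta - N%:R^-1)) =
             s%:R * (lam * delta - c * (tau * delta) + c / N%:R))%R by ring.
  have e2 : (- (s%:R * (tau - 1) ^+ 2 * delta) / (8 * tau / 3 - 2 / 3) =
             s%:R * (- ((tau - 1) ^+ 2 * delta) / (8 * tau / 3 - 2 / 3)))%R by ring.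
  by rewrite e1 e2 ler_wpM2l // ltW.
by move=> i _; rewrite mem_enum.
Qed.
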